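(* Let $f:\{-1,1\}^k\to\{0,1\}$ and $\delta\in(0,1)$. There exists a vanishing probability measure on $\mathcal{C}_\delta(f)$ if and only if there exists a vanishing probability measure on $\mathcal{C}(f)$.
   Context: $\mathcal{C}(f)$ is the set of symmetric $(k+1)\times(k+1)$ moment matrices $\zeta(\nu)$ (indices $0..k$: $\zeta(i,i)=1$, $\zeta(0,i)=\mathbb{E}_\nu x_i$, $\zeta(i,j)=\mathbb{E}_\nu x_ix_j$ for $i\neq j$) over distributions $\nu$ on $f^{-1}(1)$; $\mathcal{C}_\delta(f)=\{(1-\delta)\zeta+\delta I_{k+1}:\zeta\in\mathcal{C}(f)\}$. For $S\subseteq[k]$, a permutation $\pi$ of $S$, and $b\in\{-1,1\}^{|S|}$, $\zeta_{S,\pi,b}$ is the submatrix of $\zeta$ on rows/columns $\{0\}\cup S$ with the $S$-coordinates permuted by $\pi$, multiplied entrywise by $(1\ b)(1\ b)^T$; for a measure $\Lambda$, $\Lambda_{S,\pi,b}$ is the law of $\zeta_{S,\pi,b}$, $\zeta\sim\Lambda$. With $\hat f(S)$ the Fourier coefficients of $f$, a probability measure $\Lambda$ (on either body) is vanishing if for every $t\in[k]$ the signed measure $\mathbb{E}_{|S|=t}\mathbb{E}_{\pi}\mathbb{E}_{b}[(\prod_{i\in S}b_i)\hat f(S)\Lambda_{S,\pi,b}]$ ($S,\pi,b$ uniform) is identically zero. *)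

(* Defs.v *)
From HB Require Import structures.
From mathcomp Require Import all_boot all_order all_algebra.
From mathcomp Require Import fingroup perm.
From mathcomp Require Import all_classical all_reals all_analysis.
Set Implicit Arguments. Unset Strict Implicit. Unset Printing Implicit Defensive.
Import Order.TTheory GRing.Theory Num.Theory.
Local Open Scope classical_set_scope.
Local Open Scope ring_scope.

(* Points of {-1,1}^k are encoded as x : {ffun 'I_k -> bool}; coordinate i
   has sign value [sgnb (x i)], true ↦ 1, false ↦ -1. Coordinate i : 'I_k
   of the paper's [k] corresponds to matrix index (lift ord0 i) : 'I_k.+1,
   and matrix index ord0 is the paper's index 0. *)
Definition sgnb (R : pzRingType) (b : bool) : R := if b then 1 else -1.

Definition cube (k : nat) := {ffun 'I_k -> bool}.

Definition xext (R : pzRingType) (k : nat) (x : cube k) (i : 'I_k.+1) : R :=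
  if unlift ord0 i is Some j then sgnb R (x j) else 1.

Definition distr_on (R : realType) (k : nat) (f : cube k -> bool)
  (nu : cube k -> R) : Prop :=
  (forall x, 0 <= nu x) /\ (\sum_x nu x = 1) /\ (forall x, ~~ f x -> nu x = 0).

Definition moment (R : realType) (k : nat) (nu : cube k -> R) : 'M[R]_k.+1 :=
  \matrix_(i, j) (if i == j then 1
                  else \sum_x nu x * (xext R x i * xext R x j)).

Definition Cbody (R : realType) (k : nat) (f : cube k -> bool)
  : set 'M[R]_k.+1 :=
  [set z | exists nu, distr_on f nu /\ z = moment nu].

Definition Cdelta (R : realType) (k : nat) (f : cube k -> bool) (d : R)
  : set 'M[R]_k.+1 :=
  [set (1 - d) *: z + d *: 1%:M | z in @Cbody R k f].

Definition MT (R : realType) (n : nat) :=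
  g_sigma_algebraType (@open (matrix R^o n n)).

Definition fhat (R : realType) (k : nat) (f : cube k -> bool) (S : {set 'I_k})
  : R :=
  (2 ^+ k)^-1 * \sum_(x : cube k) (if f x then 1 else 0) *
                 \prod_(i in S) sgnb R (x i).

(* zeta_{S,pi,b}: rows/columns {0} ∪ S, S listed in increasing order and
   permuted by pi, entries multiplied by (1 b)(1 b)^T. *)
Definition subidx (k t : nat) (S : {set 'I_k}) (pi : 'S_t) (i : 'I_t.+1)
  : 'I_k.+1 :=
  if unlift ord0 i is Some j
  then nth ord0 [seq lift ord0 s | s <- enum S] (pi j)
  else ord0.

Definition bext (R : pzRingType) (t : nat) (b : {ffun 'I_t -> bool})
  (i : 'I_t.+1) : R :=
  if unlift ord0 i is Some j then sgnb R (b j) else 1.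

Definition subperm (R : realType) (k t : nat) (S : {set 'I_k}) (pi : 'S_t)
  (b : {ffun 'I_t -> bool}) (z : 'M[R]_k.+1) : 'M[R]_t.+1 :=
  \matrix_(i, j) (z (subidx S pi i) (subidx S pi j) * (bext R b i * bext R b j)).

(* Lambda is vanishing: for every t in [k] the signed measure
   E_{|S|=t} E_pi E_b [(prod b_i) fhat(S) Lambda_{S,pi,b}] is zero,
   i.e. vanishes on every Borel set A of (t+1)x(t+1) matrices. *)
Definition vanishing (R : realType) (k : nat) (f : cube k -> bool)
  (L : probability (MT R k.+1) R) : Prop :=
  forall t : nat, (1 <= t <= k)%N ->
  forall A : set (MT R t.+1), measurable A ->
    \sum_(S : {set 'I_k} | #|S| == t)
     \sum_(pi : 'S_t)
      \sum_(b : {ffun 'I_t -> bool})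
        ((('C(k, t) * t`! * 2 ^ t)%:R)^-1 *
         (\prod_(j : 'I_t) sgnb R (b j)) * fhat R f S *
         fine (L (subperm S pi b @^-1` A))) = 0.

(* Main.v *)
Require Import Defs.
From HB Require Import structures.
From mathcomp Require Import all_boot all_order all_algebra.
From mathcomp Require Import fingroup perm.
From mathcomp Require Import all_classical all_reals all_analysis.
Import Order.TTheory GRing.Theory Num.Theory.
Local Open Scope classical_set_scope.
Local Open Scope ring_scope.
Set Implicit Arguments. Unset Strict Implicit.

Definition aff (R : realType) n (a c : R) (z : 'M[R]_n) : 'M[R]_n := a *: z + c *: 1%:M.

Lemma aff_cont (R : realType) n (a c : R) : continuous (aff a c : matrix R^o n n -> matrix R^o n n).
Proof.
move=> z. apply: (@continuousD R (matrix R^o n n) (matrix R^o n n) (fun z => a *: z) (fun=> c *: 1%:M)).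
  apply: (@continuousZr R (matrix R^o n n) (matrix R^o n n) id). by [].
exact: cst_continuous.
Qed.

Lemma aff_meas (R : realType) n (a c : R) :
  measurable_fun [set: MT R n] (aff a c : MT R n -> MT R n).
Proof.
apply: measurability; first reflexivity.
move=> _ [B oB <-]. rewrite setTI. apply: sub_gen_smallest.
apply: (@open_comp (matrix R^o n n) (matrix R^o n n) (aff a c) B) => //.
by move=> x _; exact: aff_cont.
Qed.

Definition affM (R : realType) n (a c : R) : MT R n -> MT R n := aff a c.
HB.instance Definition _ (R : realType) n (a c : R) :=
  isMeasurableFun.Build _ _ (MT R n) (MT R n) (affM a c) (aff_meas a c).

Lemma nth_lift_neq0 k t (S : {set 'I_k}) (pi : 'S_t) (j : 'I_t) : #|S| = t ->
  nth ord0 [seq lift ord0 s | s <- enum S] (pi j) != ord0 :> 'I_k.+1.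
Proof.
move=> St.
have hj : (pi j < size [seq lift ord0 s | s <- enum S])%N by rewrite size_map -cardE St.
apply/eqP=> E; move: (mem_nth ord0 hj); rewrite E => /mapP [s _] /(congr1 val).
by rewrite /= /bump leq0n.
Qed.

Lemma subidx_inj k t (S : {set 'I_k}) (pi : 'S_t) : #|S| = t -> injective (subidx S pi).
Proof.
move=> St i j; rewrite /subidx.
case: (unliftP ord0 i) => [i'|] ->; case: (unliftP ord0 j) => [j'|] -> //.
- have hi : (pi i' < size [seq lift ord0 s | s <- enum S])%N by rewrite size_map -cardE St.
  have hj : (pi j' < size [seq lift ord0 s | s <- enum S])%N by rewrite size_map -cardE St.
  move/eqP; rewrite nth_uniq //; last by rewrite map_inj_uniq ?enum_uniq //; exact: lift_inj.
  by move/eqP/val_inj/perm_inj ->.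
- by move=> E; move: (nth_lift_neq0 pi i' St); rewrite E eqxx.
- by move=> E; move: (nth_lift_neq0 pi j' St); rewrite -E eqxx.
Qed.

Lemma bext_sq (R : realType) t (b : {ffun 'I_t -> bool}) i : bext R b i * bext R b i = 1.
Proof. rewrite /bext; case: (unlift _ _) => [j|]; last exact: mulr1.
by rewrite /sgnb; case: (b j); rewrite ?mulr1 ?mulN1r ?opprK. Qed.

Lemma subperm_aff (R : realType) k t (S : {set 'I_k}) (pi : 'S_t) b (a c : R) z :
  #|S| = t -> subperm S pi b (aff a c z) = aff a c (subperm S pi b z).
Proof.
move=> St; apply/matrixP => i j; rewrite /aff !mxE.
rewrite mulrDl -mulrA; congr (_ + _).
rewrite -mulrA; congr (_ * _).
have [->|ij] := eqVneq i j; first by rewrite !eqxx bext_sq mulr1.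
have -> : (subidx S pi i == subidx S pi j) = false.
  by apply/negbTE; apply: contra ij => /eqP /(subidx_inj St) ->.
by rewrite /= ?mul0r ?mulr0.
Qed.

Lemma vanishing_aff (R : realType) k (f : cube k -> bool)
  (L : probability (MT R k.+1) R) (a c : R) :
  vanishing f L -> vanishing f (distribution L (affM a c)).
Proof.
move=> H t ht A mA.
have mA' : measurable (aff a c @^-1` A : set (MT R t.+1)).
  by have := aff_meas a c measurableT mA; rewrite setTI.
apply: etrans (H t ht _ mA').
apply: eq_bigr => S /eqP St; apply: eq_bigr => pi _; apply: eq_bigr => b _.
congr (_ * fine _).
rewrite /distribution /pushforward; congr (L _).
by apply/seteqP; split => z /=; rewrite /affM subperm_aff.
Qed.
Lemma aff_comp (R : realType) n (a c a' c' : R) (z : 'M[R]_n) :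
  aff a' c' (aff a c z) = aff (a' * a) (a' * c + c') z.
Proof. by rewrite /aff scalerDr !scalerA scalerDl addrA. Qed.

Lemma aff_id (R : realType) n (z : 'M[R]_n) : aff 1 0 z = z.
Proof. by rewrite /aff scale1r scale0r addr0. Qed.

Theorem mainTheorem6 (R : realType) (k : nat) (f : cube k -> bool) (d : R) :
  0 < d < 1 ->
  ((exists L : probability (MT R k.+1) R,
       L (~` Cdelta f d) = 0%E /\ vanishing f L) <->
   (exists L : probability (MT R k.+1) R,
       L (~` @Cbody R k f) = 0%E /\ vanishing f L)).
Proof.
move=> /andP [d0 d1].
have e0 : 1 - d != 0 by rewrite subr_eq0 eq_sym lt_eqF.
set a := 1 - d; set a' := a^-1; set c' := - (d / a).
have E1 : a' * a = 1 by rewrite mulVf.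
have E2 : a' * d + c' = 0 by rewrite /c' /a' mulrC subrr.
have E3 : a * a' = 1 by rewrite mulfV.
have E4 : a * c' + d = 0 by rewrite /c' mulrN mulrCA mulfV // mulr1 addNr.
have g_f z : aff a' c' (aff a d z) = z :> 'M[R]_k.+1 by rewrite aff_comp E1 E2 aff_id.
have f_g z : aff a d (aff a' c' z) = z :> 'M[R]_k.+1 by rewrite aff_comp E3 E4 aff_id.
split=> -[L [HL vL]].
- exists (distribution L (affM a' c')); split; last exact: vanishing_aff.
  rewrite /distribution /pushforward -HL; congr (L _).
  apply/seteqP; split => w /= H1 H2; apply: H1.
  + by case: H2 => z Cz <-; rewrite /affM -/(aff a d z) g_f.
  + by exists (aff a' c' w) => //; rewrite -[RHS]f_g.
- exists (distribution L (affM a d)); split; last exact: vanishing_aff.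
  rewrite /distribution /pushforward -HL; congr (L _).
  apply/seteqP; split => w /= H1 H2; apply: H1.
  + by exists w.
  + by case: H2 => z Cz; rewrite /affM -/(aff a d z) => /(congr1 (aff a' c')); rewrite !g_f => <-.
Qed.
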